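(* Suppose that $\theta<\kappa$ is a pair of infinite regular cardinals and $\boxminus^-(\kappa,\theta)$ holds. Then there exists an $E^\kappa_{\ge\theta}$-closed subadditive coloring $c:[\kappa]^2\to\theta$ witnessing $\mathrm U(\kappa,2,\theta,2)$. In particular, $\kappa$ is not weakly compact.
   Context: $E^\kappa_{\ge\theta}$ is the set of ordinals below $\kappa$ of cofinality $\ge\theta$; $\mathrm{acc}(A)=\{\alpha\in A\mid\sup(A\cap\alpha)=\alpha>0\}$. $\boxminus^-(\kappa,\theta)$ asserts the existence of $\langle C_{\alpha,i}\mid\alpha\in\mathrm{acc}(\kappa),\ i(\alpha)\le i<\theta\rangle$ such that: (1) for all $\alpha$, $i(\alpha)<\theta$ and $\langle C_{\alpha,i}\mid i(\alpha)\le i<\theta\rangle$ is a $\subseteq$-increasing sequence of clubs in $\alpha$ with $\mathrm{acc}(\alpha)=\bigcup_i\mathrm{acc}(C_{\alpha,i})$; (2) for all $\alpha$, $i(\alpha)\le i<\theta$ and $\bar\alpha\in\mathrm{acc}(C_{\alpha,i})\cap E^\kappa_{\ge\theta}$: $i(\bar\alpha)\le i$ and $C_{\bar\alpha,i}=C_{\alpha,i}\cap\bar\alpha$; (3) for all $\bar\alpha<\alpha$ in $\mathrm{acc}(\kappa)$ and all sufficiently large $i<\theta$, $C_{\bar\alpha,i}=C_{\alpha,i}\cap\bar\alpha$; (4) for every club $D\subseteq\kappa$ there is $\alpha\in\mathrm{acc}(D)\cap E^\kappa_{\ge\theta}$ with $D\cap\alpha\ne C_{\alpha,i}$ for all $i<\theta$.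 A coloring $c:[\kappa]^2\to\theta$ witnesses $\mathrm U(\kappa,2,\theta,2)$ if for every $H\in[\kappa]^\kappa$, $c``[H]^2$ is cofinal in $\theta$. It is subadditive if for all $\alpha<\beta<\gamma<\kappa$, $c(\alpha,\gamma)\le\max\{c(\alpha,\beta),c(\beta,\gamma)\}$ and $c(\alpha,\beta)\le\max\{c(\alpha,\gamma),c(\beta,\gamma)\}$. It is $\Sigma$-closed (for $\Sigma\subseteq\kappa$) if whenever $\alpha<\beta<\kappa$, $j<\theta$, $\alpha\in\Sigma$ and $\sup\{\varepsilon<\alpha\mid c(\varepsilon,\beta)\le j\}=\alpha$, then $c(\alpha,\beta)\le j$. *)

(* Defs.v *)
(* kappa is modelled as a type K carrying a strict well-order
   [lt]; its elements are the ordinals below kappa.  Ordinals below kappa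
   (e.g. theta, colours, indices) are elements of K. *)
From Stdlib Require Import List.
Set Implicit Arguments.

Section OrdinalCombinatorics.
Variables (K : Type) (lt : K -> K -> Prop).

Definition le (x y : K) : Prop := lt x y \/ x = y.

Definition strict_well_order : Prop :=
  (forall x, ~ lt x x) /\
  (forall x y z, lt x y -> lt y z -> lt x z) /\
  (forall x y, lt x y \/ x = y \/ lt y x) /\
  well_founded lt.

Definition full : K -> Prop := fun _ => True.
Definition below (a : K) : K -> Prop := fun x => lt x a.

Definition subset (A B : K -> Prop) : Prop := forall x, A x -> B x.

Definition card_le (A B : K -> Prop) : Prop :=
  exists f : K -> K, (forall x, A x -> B (f x)) /\
    (forall x y, A x -> A y -> f x = f y -> x = y).

Definition finite_set (A : K -> Prop) : Prop :=
  exists l : list K, forall x, A x -> In x l.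

Definition cofinal_in (a : K) (X : K -> Prop) : Prop :=
  subset X (below a) /\ forall b, lt b a -> exists x, X x /\ le b x.

Definition unbounded (X : K -> Prop) : Prop :=
  forall b, exists x, X x /\ le b x.

Definition is_cardinal (a : K) : Prop :=
  forall b, lt b a -> ~ card_le (below a) (below b).

Definition infinite_regular (a : K) : Prop :=
  is_cardinal a /\ ~ finite_set (below a) /\
  forall X, cofinal_in a X -> card_le (below a) X.

Definition kappa_infinite_regular : Prop :=
  (forall b, ~ card_le full (below b)) /\ ~ finite_set full /\
  forall X, unbounded X -> card_le full X.

Definition cof_ge (theta a : K) : Prop :=
  forall X, cofinal_in a X -> card_le (below theta) X.

Definition E_ge (theta : K) : K -> Prop := fun a => cof_ge theta a.

Definition acc (A : K -> Prop) (a : K) : Prop :=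
  (exists b, lt b a) /\
  forall b, lt b a -> exists g, A g /\ lt b g /\ lt g a.

Definition club_in (a : K) (C : K -> Prop) : Prop :=
  cofinal_in a C /\ forall b, lt b a -> acc C b -> C b.

Definition club (D : K -> Prop) : Prop :=
  unbounded D /\ forall b, acc D b -> D b.

Definition set_eq (A B : K -> Prop) : Prop := forall x, A x <-> B x.

Definition restrict (A : K -> Prop) (a : K) : K -> Prop :=
  fun x => A x /\ lt x a.

Definition boxminus_minus_seq (theta : K)
    (C : K -> K -> K -> Prop) (i : K -> K) : Prop :=
  (* (1) *)
  (forall a, acc full a ->
     lt (i a) theta /\
     (forall j, le (i a) j -> lt j theta -> club_in a (C a j)) /\
     (forall j j', le (i a) j -> le j j' -> lt j' theta ->
        subset (C a j) (C a j')) /\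
     (forall b, acc (below a) b <->
        exists j, le (i a) j /\ lt j theta /\ acc (C a j) b)) /\
  (* (2) *)
  (forall a j ab, acc full a -> le (i a) j -> lt j theta ->
     acc (C a j) ab -> E_ge theta ab ->
     le (i ab) j /\ set_eq (C ab j) (restrict (C a j) ab)) /\
  (* (3) *)
  (forall ab a, acc full ab -> acc full a -> lt ab a ->
     exists j0, lt j0 theta /\
       forall j, le j0 j -> lt j theta -> le (i a) j -> le (i ab) j ->
         set_eq (C ab j) (restrict (C a j) ab)) /\
  (* (4) *)
  (forall D, club D ->
     exists a, acc D a /\ E_ge theta a /\
       forall j, le (i a) j -> lt j theta ->
         ~ set_eq (restrict D a) (C a j)).

Definition boxminus_minus (theta : K) : Prop :=
  exists (C : K -> K -> K -> Prop) (i : K -> K), boxminus_minus_seq theta C i.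

(* c : [kappa]^2 -> theta, with c a b read for a < b *)
Definition coloring_into (theta : K) (c : K -> K -> K) : Prop :=
  forall a b, lt a b -> lt (c a b) theta.

Definition witnesses_U (theta : K) (c : K -> K -> K) : Prop :=
  forall H, card_le full H ->
    forall j, lt j theta ->
      exists a b, H a /\ H b /\ lt a b /\ le j (c a b).

Definition subadditive (c : K -> K -> K) : Prop :=
  forall a b g, lt a b -> lt b g ->
    (le (c a g) (c a b) \/ le (c a g) (c b g)) /\
    (le (c a b) (c a g) \/ le (c a b) (c b g)).

Definition sigma_closed (theta : K) (Sigma : K -> Prop) (c : K -> K -> K)
  : Prop :=
  forall a b j, lt a b -> lt j theta -> Sigma a ->
    acc (fun e => le (c e b) j) a -> le (c a b) j.

(* kappa is weakly compact: kappa > omega and kappa -> (kappa)^2_2 *)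
Definition weakly_compact : Prop :=
  (~ exists f : K -> nat, forall x y, f x = f y -> x = y) /\
  forall f : K -> K -> bool, exists H, card_le full H /\
    exists bcol : bool, forall x y, H x -> H y -> lt x y -> f x y = bcol.

End OrdinalCombinatorics.

(* Main.v *)
Require Import Defs.
From Stdlib Require Import Classical ClassicalEpsilon FunctionalExtensionality List.

Section Basics.
Variable K : Type.
Variable lt : K -> K -> Prop.
Hypothesis Hwo : strict_well_order lt.
Hypothesis Hkappa : kappa_infinite_regular lt.

Lemma irr x : ~ lt x x.
Proof. destruct Hwo as [H _]; apply H. Qed.
Lemma trans x y z : lt x y -> lt y z -> lt x z.
Proof. destruct Hwo as [_ [H _]]; apply H. Qed.
Lemma tri x y : lt x y \/ x = y \/ lt y x.
Proof. destruct Hwo as [_ [_ [H _]]]; apply H. Qed.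
Lemma wf : well_founded lt.
Proof. destruct Hwo as [_ [_ [_ H]]]; apply H. Qed.

Lemma le_refl x : le lt x x.
Proof. right; reflexivity. Qed.
Lemma lt_le x y : lt x y -> le lt x y.
Proof. left; assumption. Qed.
Lemma le_trans x y z : le lt x y -> le lt y z -> le lt x z.
Proof. unfold le. intros [H|H] [H'|H'].
  - left; eauto using trans.
  - subst; left; auto.
  - subst; left; auto.
  - subst; right; auto. Qed.
Lemma le_lt_trans x y z : le lt x y -> lt y z -> lt x z.
Proof. unfold le. intros [H|H] H'; subst; eauto using trans. Qed.
Lemma lt_le_trans x y z : lt x y -> le lt y z -> lt x z.
Proof. unfold le. intros H [H'|H']; subst; eauto using trans. Qed.
Lemma not_lt_le x y : ~ lt x y -> le lt y x.
Proof. unfold le. intros H. destruct (tri x y) as [h|[h|h]]; [contradiction|right; auto|left; auto]. Qed.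
Lemma le_not_lt x y : le lt x y -> ~ lt y x.
Proof. intros H H'. apply (irr x). eapply le_lt_trans; eauto. Qed.
Lemma not_le_lt x y : ~ le lt x y -> lt y x.
Proof. unfold le. intros H. destruct (tri x y) as [h|[h|h]]; auto; exfalso; apply H; [left|right]; auto. Qed.
Lemma le_antisym x y : le lt x y -> le lt y x -> x = y.
Proof. intros [H|H] H'; auto. exfalso; eapply le_not_lt; eauto. Qed.

Lemma min_exists (P : K -> Prop) : (exists x, P x) -> exists x, P x /\ forall y, P y -> le lt x y.
Proof.
  intros [x Hx]. revert Hx. pattern x. apply (well_founded_ind wf). clear x.
  intros x IH Hx.
  destruct (classic (exists y, P y /\ lt y x)) as [[y [Py Hy]]|N].
  - apply (IH y Hy Py).
  - exists x. split; auto. intros y Py. apply not_lt_le. intros h. apply N. eauto.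
Qed.

Lemma max_exists a b : exists m, le lt a m /\ le lt b m /\ (m = a \/ m = b).
Proof.
  destruct (tri a b) as [h|[h|h]].
  - exists b. repeat split; auto using lt_le, le_refl.
  - subst. exists b. repeat split; auto using le_refl.
  - exists a. repeat split; auto using lt_le, le_refl.
Qed.

Lemma inh : inhabited K.
Proof.
  destruct (classic (inhabited K)) as [h|h]; auto.
  exfalso. destruct Hkappa as [_ [Hf _]]. apply Hf. exists nil. intros x _. apply h. constructor; auto.
Qed.

Lemma no_max x : exists y, lt x y.
Proof.
  apply NNPP. intros N.
  destruct Hkappa as [_ [Hf Hreg]].
  assert (Hu : unbounded lt (fun y => y = x)).
  { intros b. exists x. split; auto. apply not_lt_le. intros h. apply N. eauto. }
  destruct (Hreg _ Hu) as [f [Hf1 Hf2]].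
  apply Hf. exists (x :: nil). intros z _. left.
  symmetry. apply Hf2; try exact I. rewrite (Hf1 z I), (Hf1 x I). reflexivity.
Qed.

Lemma unb_card X : unbounded lt X -> card_le (@full K) X.
Proof. destruct Hkappa as [_ [_ H]]. apply H. Qed.

Lemma card_unb X : card_le (@full K) X -> unbounded lt X.
Proof.
  intros [f [Hf1 Hf2]] b. apply NNPP. intros N.
  destruct Hkappa as [H _]. apply (H b). exists f. split; auto.
  intros x _. apply not_le_lt. intros h. apply N. exists (f x). split; auto. apply Hf1. exact I.
Qed.

Lemma unb_strict X : unbounded lt X -> forall b, exists y, X y /\ lt b y.
Proof.
  intros HX b. destruct (no_max b) as [b' Hb']. destruct (HX b') as [y [Hy Hy']].
  exists y. split; auto. eapply lt_le_trans; eauto.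
Qed.

Lemma pigeon_gen (Y : Type) (X : K -> Prop) (g : K -> Y) :
  unbounded lt X ->
  (forall e : K -> K, (forall z, X (e z)) -> ~ (forall z z', g (e z) = g (e z') -> z = z')) ->
  exists y, unbounded lt (fun x => X x /\ g x = y).
Proof.
  intros HX Hsmall. apply NNPP. intros N.
  pose proof inh as I0.
  assert (HB : forall y, exists B, forall x, X x -> g x = y -> lt x B).
  { intros y. apply NNPP. intros N2. apply N. exists y. intros b.
    apply NNPP. intros N3. apply N2. exists b. intros x Hx Hg.
    apply not_le_lt. intros h. apply N3. exists x. auto. }
  set (B := fun y => epsilon I0 (fun B => forall x, X x -> g x = y -> lt x B)).
  assert (HBs : forall y x, X x -> g x = y -> lt x (B y)).
  { intros y. exact (epsilon_spec I0 _ (HB y)). }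
  set (Y' := fun m => exists x, X x /\ B (g x) = m).
  destruct (classic (unbounded lt Y')) as [HU|HU].
  - destruct (unb_card _ HU) as [h [Hh1 Hh2]].
    set (p := fun z => epsilon I0 (fun x => X x /\ B (g x) = h z)).
    assert (Hp : forall z, X (p z) /\ B (g (p z)) = h z).
    { intros z. apply (epsilon_spec I0 (fun x => X x /\ B (g x) = h z)). apply (Hh1 z I). }
    apply (Hsmall p).
    + intros z; apply Hp.
    + intros z z' E. apply Hh2; try exact I. rewrite <- (proj2 (Hp z)), <- (proj2 (Hp z')), E. reflexivity.
  - apply HU. intros b. apply NNPP. intros N4.
    assert (HM : exists M, forall m, Y' m -> lt m M).
    { apply NNPP. intros N5. apply N5. exists b. intros m Hm. apply not_le_lt. intros h.
      apply N4. exists m. auto. }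
    destruct HM as [M HM].
    destruct (HX M) as [x [Hx Hx']].
    apply (le_not_lt _ _ Hx'). eapply trans. apply (HBs (g x) x Hx eq_refl).
    apply HM. exists x. auto.
Qed.

Lemma pigeon_bounded (X : K -> Prop) (g : K -> K) b :
  unbounded lt X -> (forall x, X x -> lt (g x) b) ->
  exists v, unbounded lt (fun x => X x /\ g x = v).
Proof.
  intros HX Hg. apply pigeon_gen; auto.
  intros e He Hinj. destruct Hkappa as [H _]. apply (H b).
  exists (fun z => g (e z)). split.
  - intros z _. apply Hg, He.
  - intros z z' _ _. apply Hinj.
Qed.


Section Part1.
Variable theta : K.
Variable C : K -> K -> K -> Prop.
Variable i : K -> K.
Hypothesis Hbox : boxminus_minus_seq lt theta C i.

Definition Lim a := acc lt (@full K) a.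

Lemma B1 a : Lim a -> lt (i a) theta /\
     (forall j, le lt (i a) j -> lt j theta -> club_in lt a (C a j)).
Proof. intros h. destruct Hbox as [H _]. destruct (H a h) as [h1 [h2 _]]. auto. Qed.

Lemma B2 a j ab : Lim a -> le lt (i a) j -> lt j theta ->
     acc lt (C a j) ab -> E_ge lt theta ab ->
     le lt (i ab) j /\ set_eq (C ab j) (restrict lt (C a j) ab).
Proof. destruct Hbox as [_ [H _]]. apply H. Qed.

Lemma B3 ab a : Lim ab -> Lim a -> lt ab a ->
     exists j0, lt j0 theta /\
       forall j, le lt j0 j -> lt j theta -> le lt (i a) j -> le lt (i ab) j ->
         set_eq (C ab j) (restrict lt (C a j) ab).
Proof. destruct Hbox as [_ [_ [H _]]]. apply H. Qed.

Lemma B4 D : club lt D ->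
     exists a, acc lt D a /\ E_ge lt theta a /\
       forall j, le lt (i a) j -> lt j theta ->
         ~ set_eq (restrict lt D a) (C a j).
Proof. destruct Hbox as [_ [_ [_ H]]]. apply H. Qed.

Lemma C_sub a k x : Lim a -> le lt (i a) k -> lt k theta -> C a k x -> lt x a.
Proof. intros h1 h2 h3 h4. destruct (proj2 (B1 a h1) k h2 h3) as [[Hs _] _]. apply Hs, h4. Qed.

Lemma C_cof a k y : Lim a -> le lt (i a) k -> lt k theta -> lt y a -> exists x, C a k x /\ le lt y x.
Proof. intros h1 h2 h3 h4. destruct (proj2 (B1 a h1) k h2 h3) as [[_ Hc] _]. apply Hc, h4. Qed.

Lemma C_closed a k b : Lim a -> le lt (i a) k -> lt k theta -> lt b a -> acc lt (C a k) b -> C a k b.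
Proof. intros h1 h2 h3 h4 h5. destruct (proj2 (B1 a h1) k h2 h3) as [_ Hc]. apply Hc; auto. Qed.

Lemma lim_above x : exists a, Lim a /\ lt x a.
Proof.
  set (D := fun y => lt x y).
  assert (HD : club lt D).
  { split.
    - intros b. destruct (tri x b) as [h|[h|h]].
      + exists b. split; auto. apply le_refl.
      + subst. destruct (no_max b) as [y Hy]. exists y. split; auto. apply lt_le; auto.
      + destruct (no_max x) as [y Hy]. exists y. split; auto. apply lt_le. eapply trans; eauto.
    - intros b [[y Hy] Hacc]. destruct (Hacc y Hy) as [g [Dg [_ Hg]]]. unfold D in *. eapply trans; eauto. }
  destruct (B4 D HD) as [a [[[y Hy] Hacc] _]].
  exists a. split.
  - split. exists y; auto. intros b Hb. destruct (Hacc b Hb) as [g [_ [h1 h2]]]. exists g. repeat split; auto.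
  - destruct (Hacc y Hy) as [g [Dg [_ Hg]]]. unfold D in *. eapply trans; eauto.
Qed.

Definition lamP x l := Lim l /\ le lt x l /\ forall l', Lim l' -> le lt x l' -> le lt l l'.

Definition lam x := epsilon inh (lamP x).

Lemma lam_spec x : lamP x (lam x).
Proof.
  unfold lam. apply epsilon_spec.
  destruct (min_exists (fun l => Lim l /\ le lt x l)) as [l [[h1 h2] h3]].
  - destruct (lim_above x) as [a [h1 h2]]. exists a. split; auto. apply lt_le; auto.
  - exists l. split; [auto|split; [auto|]]. intros l' a b. apply h3; auto.
Qed.

Lemma lam_lim x : Lim (lam x).
Proof. apply lam_spec. Qed.
Lemma lam_ge x : le lt x (lam x).
Proof. apply lam_spec. Qed.
Lemma lam_mono x y : le lt x y -> le lt (lam x) (lam y).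
Proof. intros h. apply (proj2 (proj2 (lam_spec x))). apply lam_lim. eapply le_trans; eauto. apply lam_ge. Qed.
Lemma lam_fix a : Lim a -> lam a = a.
Proof. intros h. apply le_antisym. apply (proj2 (proj2 (lam_spec a))); auto. apply le_refl. apply lam_ge. Qed.

Definition good a b k := le lt (i a) k /\ le lt (i b) k /\ lt k theta /\
  forall k', le lt k k' -> lt k' theta -> set_eq (C a k') (restrict lt (C b k') a).

Lemma good_exists a b : Lim a -> Lim b -> le lt a b -> exists k, good a b k.
Proof.
  intros ha hb [h|h].
  - destruct (B3 a b ha hb h) as [j0 [Hj0 Hc]].
    destruct (max_exists j0 (i a)) as [m1 [m1a [m1b m1c]]].
    destruct (max_exists m1 (i b)) as [m [ma [mb mc]]].
    assert (Hm1 : lt m1 theta) by (destruct m1c; subst; auto; apply (B1 a ha)).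
    exists m. refine (conj _ (conj _ (conj _ _))).
    + eapply le_trans; eauto.
    + auto.
    + destruct mc; subst; auto; apply (B1 b hb).
    + intros k' hk hk'. apply Hc; auto.
      * eapply le_trans; [|eauto]. eapply le_trans; eauto.
      * eapply le_trans; eauto.
      * eapply le_trans; [|eauto]. eapply le_trans; eauto.
  - subst. exists (i b). refine (conj (le_refl _) (conj (le_refl _) (conj _ _))).
    + apply (B1 b hb).
    + intros k' hk hk' x. split.
      * intros hx. split; auto. eapply C_sub; eauto.
      * intros [hx _]; auto.
Qed.

Definition G x y k := good (lam x) (lam y) k.

Definition cc x y := epsilon inh (fun k => G x y k /\ forall k', G x y k' -> le lt k k').

Lemma cc_spec x y : le lt x y -> G x y (cc x y) /\ forall k', G x y k' -> le lt (cc x y) k'.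
Proof.
  intros h. unfold cc. apply (epsilon_spec inh (fun k => G x y k /\ forall k', G x y k' -> le lt k k')).
  destruct (good_exists (lam x) (lam y) (lam_lim x) (lam_lim y) (lam_mono x y h)) as [k Hk].
  destruct (min_exists (G x y)) as [m Hm]. exists k; auto. exists m; auto.
Qed.

Lemma G_up x y k k' : G x y k -> le lt k k' -> lt k' theta -> G x y k'.
Proof.
  intros [h1 [h2 [h3 h4]]] hk hk'. refine (conj _ (conj _ (conj hk' _))).
  - eapply le_trans; eauto.
  - eapply le_trans; eauto.
  - intros k'' a b. apply h4; auto. eapply le_trans; eauto.
Qed.

Lemma cc_lt x y : le lt x y -> lt (cc x y) theta.
Proof. intros h. apply (cc_spec x y h). Qed.

Lemma cc_G x y : le lt x y -> G x y (cc x y).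
Proof. intros h. apply (cc_spec x y h). Qed.

Lemma cc_min x y k : le lt x y -> G x y k -> le lt (cc x y) k.
Proof. intros h. apply (cc_spec x y h). Qed.

Lemma G_le x y j : le lt x y -> le lt (cc x y) j -> lt j theta -> G x y j.
Proof. intros h h1 h2. eapply G_up; eauto. apply cc_G; auto. Qed.

Theorem part1_into : coloring_into lt theta cc.
Proof. intros a b h. apply cc_lt, lt_le, h. Qed.

Theorem part1_subadd : subadditive lt cc.
Proof.
  intros a b g hab hbg.
  assert (hag : lt a g) by (eapply trans; eauto).
  assert (lab : le lt (lam a) (lam b)) by (apply lam_mono, lt_le, hab).
  assert (lbg : le lt (lam b) (lam g)) by (apply lam_mono, lt_le, hbg).
  split.
  - destruct (max_exists (cc a b) (cc b g)) as [m [m1 [m2 m3]]].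
    assert (Hm : lt m theta) by (destruct m3; subst; apply cc_lt, lt_le; auto).
    assert (E1 : G a b m) by (apply G_le; auto; apply lt_le; auto).
    assert (E2 : G b g m) by (apply G_le; auto; apply lt_le; auto).
    assert (E : G a g m).
    { destruct E1 as [e1 [e2 [e3 e4]]]. destruct E2 as [f1 [f2 [f3 f4]]].
      refine (conj _ (conj _ (conj Hm _))); auto. intros k' hk hk' x. rewrite (e4 k' hk hk' x).
      unfold restrict. rewrite (f4 k' hk hk' x). unfold restrict.
      split. intros [[p q] r]; auto. intros [p r]. repeat split; auto. eapply lt_le_trans; eauto. }
    assert (Hc := cc_min a g m (lt_le _ _ hag) E).
    destruct m3; subst; [left|right]; auto.
  - destruct (max_exists (cc a g) (cc b g)) as [m [m1 [m2 m3]]].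
    assert (Hm : lt m theta) by (destruct m3; subst; apply cc_lt, lt_le; auto).
    assert (E1 : G a g m) by (apply G_le; auto; apply lt_le; auto).
    assert (E2 : G b g m) by (apply G_le; auto; apply lt_le; auto).
    assert (E : G a b m).
    { destruct E1 as [e1 [e2 [e3 e4]]]. destruct E2 as [f1 [f2 [f3 f4]]].
      refine (conj _ (conj _ (conj Hm _))); auto. intros k' hk hk' x. rewrite (e4 k' hk hk' x).
      unfold restrict. rewrite (f4 k' hk hk' x). unfold restrict.
      split. intros [p r]. repeat split; auto. eapply lt_le_trans; eauto. intros [[p q] r]; auto. }
    assert (Hc := cc_min a b m (lt_le _ _ hab) E).
    destruct m3; subst; [left|right]; auto.
Qed.

Lemma acc_lim A a : acc lt A a -> Lim a.
Proof. intros [h1 h2]. split; auto. intros b hb. destruct (h2 b hb) as [g [_ hg]]. exists g. split; auto. exact I. Qed.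

Theorem part1_closed : sigma_closed lt theta (E_ge lt theta) cc.
Proof.
  intros a b j hab hj hE hacc.
  assert (ha : Lim a) by (eapply acc_lim; eauto).
  assert (hla : lam a = a) by (apply lam_fix; auto).
  set (lb := lam b).
  assert (hlb : Lim lb) by apply lam_lim.
  assert (halb : lt a lb) by (eapply lt_le_trans; [exact hab| apply lam_ge]).
  apply cc_min. apply lt_le; auto.
  destruct hacc as [[y0 hy0] hacc'].
  destruct (hacc' y0 hy0) as [e0 [he0 [_ he0a]]].
  assert (Ge0 : G e0 b j) by (apply G_le; auto; apply lt_le; eapply trans; eauto).
  assert (ilb : le lt (i lb) j) by apply Ge0.
  destruct (classic (exists e, lt e a /\ le lt (cc e b) j /\ lam e = a)) as [[e [hea [hej hle]]]|N].
  - assert (Ge : G e b j) by (apply G_le; auto; apply lt_le; eapply trans; eauto).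
    unfold G in *. rewrite hla. rewrite hle in Ge. exact Ge.
  - assert (Hacc : forall k', le lt j k' -> lt k' theta -> acc lt (C lb k') a).
    { intros k' hk hk'. split. exists y0; auto.
      intros y hy. destruct (hacc' y hy) as [e [hej [hye hea]]].
      assert (Ge : G e b j) by (apply G_le; auto; apply lt_le; eapply trans; eauto).
      assert (hle : lt (lam e) a).
      { destruct (lam_mono e a (lt_le _ _ hea)) as [h|h]. rewrite hla in h; auto.
        exfalso. apply N. exists e. rewrite hla in h. auto. }
      destruct Ge as [g1 [g2 [g3 g4]]].
      assert (hk2 : le lt (i (lam e)) k') by (eapply le_trans; eauto).
      assert (hye' : lt y (lam e)) by (eapply lt_le_trans; [exact hye|apply lam_ge]).
      destruct (lam_lim e) as [_ hl]. destruct (hl y hye') as [g' [_ [hg1 hg2]]].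
      destruct (C_cof (lam e) k' g' (lam_lim e) hk2 hk' hg2) as [x [hx hx']].
      pose proof (C_sub (lam e) k' x (lam_lim e) hk2 hk' hx) as hxe.
      exists x. refine (conj _ (conj _ _)).
      + apply (g4 k' hk hk' x) in hx. apply hx.
      + eapply lt_le_trans; eauto.
      + eapply trans; eauto. }
    unfold G. rewrite hla. fold lb.
    destruct (B2 lb j a hlb ilb hj (Hacc j (le_refl _) hj) hE) as [ia _].
    refine (conj ia (conj ilb (conj hj _))).
    intros k' hk hk'.
    apply (B2 lb k' a hlb (le_trans _ _ _ ilb hk) hk' (Hacc k' hk hk') hE).
Qed.

Theorem part1_U : witnesses_U lt theta cc.
Proof.
  intros H HH j hj. apply NNPP. intros N.
  assert (HG : forall a b, H a -> H b -> lt a b -> G a b j).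
  { intros a b ha hb hab. apply G_le. apply lt_le; auto.
    apply lt_le. apply not_le_lt. intros h. apply N. exists a, b. auto. auto. }
  assert (HU : unbounded lt H) by (apply card_unb; auto).
  assert (iH : forall b, H b -> le lt (i (lam b)) j).
  { intros b hb. destruct (unb_strict H HU b) as [b' [hb' hbb']]. apply (HG b b' hb hb' hbb'). }
  assert (coh : forall b b' x, H b -> H b' -> lt b b' -> (C (lam b) j x <-> C (lam b') j x /\ lt x (lam b))).
  { intros b b' x hb hb' hbb'. destruct (HG b b' hb hb' hbb') as [_ [_ [_ h]]]. apply (h j (le_refl _) hj x). }
  set (D := fun x => exists b, H b /\ C (lam b) j x).
  assert (inD : forall b x, H b -> D x -> lt x (lam b) -> C (lam b) j x).
  { intros b x hb [b' [hb' hx]] hxb. destruct (tri b b') as [h|[h|h]].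
    - apply (coh b b' x hb hb' h). auto.
    - subst; auto.
    - apply (coh b' b x hb' hb h) in hx. apply hx. }
  assert (accT : forall g b, H b -> lt g (lam b) -> acc lt D g -> acc lt (C (lam b) j) g).
  { intros g b hb hgb [h1 h2]. split; auto. intros y hy. destruct (h2 y hy) as [x [hx [h3 h4]]].
    exists x. refine (conj _ (conj h3 h4)). apply inD; auto. eapply trans; eauto. }
  assert (HD : club lt D).
  { split.
    - intros y. destruct (unb_strict H HU y) as [b [hb hyb]].
      assert (hyl : lt y (lam b)) by (eapply lt_le_trans; [exact hyb|apply lam_ge]).
      destruct (C_cof (lam b) j y (lam_lim b) (iH b hb) hj hyl) as [x [hx hx']].
      exists x. split; auto. exists b. auto.
    - intros g hg. destruct (unb_strict H HU g) as [b [hb hgb]].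
      assert (hgl : lt g (lam b)) by (eapply lt_le_trans; [exact hgb|apply lam_ge]).
      exists b. split; auto. apply C_closed; auto using lam_lim. }
  destruct (B4 D HD) as [a [hacc [hE hne]]].
  destruct (unb_strict H HU a) as [b [hb hab]].
  assert (hal : lt a (lam b)) by (eapply lt_le_trans; [exact hab|apply lam_ge]).
  destruct (B2 (lam b) j a (lam_lim b) (iH b hb) hj (accT a b hb hal hacc) hE) as [ia he].
  apply (hne j ia hj). intros x. rewrite (he x). unfold restrict. split.
  - intros [hx hxa]. split; auto. apply inD; auto. eapply trans; eauto.
  - intros [hx hxa]. split; auto. exists b. auto.
Qed.

End Part1.

Definition bP (P : Prop) : bool := if excluded_middle_informative P then true else false.
Lemma bP_true P : bP P = true -> P.
Proof. unfold bP. destruct (excluded_middle_informative P); auto. discriminate. Qed.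
Lemma bP_false P : bP P = false -> ~ P.
Proof. unfold bP. destruct (excluded_middle_informative P); auto. discriminate. Qed.

Definition lexr (r : K -> K -> Prop) (l : K) (u v : K -> K) : Prop :=
  exists d, lt d l /\ (forall e, lt e d -> u e = v e) /\ r (u d) (v d).

Lemma lex_tri l u v : (exists d, lt d l /\ u d <> v d) -> lexr lt l u v \/ lexr lt l v u.
Proof.
  intros hex. destruct (min_exists _ hex) as [d [[hd hne] hmin]].
  assert (agr : forall e, lt e d -> u e = v e).
  { intros e he. apply NNPP. intros N. apply (le_not_lt _ _ (hmin e (conj (trans _ _ _ he hd) N)) he). }
  destruct (tri (u d) (v d)) as [h|[h|h]].
  - left. exists d. auto.
  - contradiction.
  - right. exists d. repeat split; auto. intros e he. symmetry. auto.
Qed.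

Lemma lex_antisym l1 l2 u v : lexr lt l1 u v -> lexr lt l2 v u -> False.
Proof.
  intros [d1 [_ [a1 r1]]] [d2 [_ [a2 r2]]].
  destruct (tri d1 d2) as [h|[h|h]].
  - rewrite (a2 d1 h) in r1. exact (irr _ r1).
  - subst. exact (irr _ (trans _ _ _ r1 r2)).
  - rewrite (a1 d2 h) in r2. exact (irr _ r2).
Qed.

Section Part2.
Variable theta : K.
Hypothesis Htheta : infinite_regular lt theta.
Hypothesis HWC : weakly_compact lt.

Lemma theta_limit j : lt j theta -> exists j', lt j j' /\ lt j' theta.
Proof.
  intros hj. apply NNPP. intros N.
  destruct Htheta as [_ [Hfin Hreg]].
  assert (Hcof : cofinal_in lt theta (fun y => y = j)).
  { split.
    - intros y hy. subst. exact hj.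
    - intros b hb. exists j. split; auto. apply not_lt_le. intros h. apply N. eauto. }
  destruct (Hreg _ Hcof) as [f [hf1 hf2]].
  apply Hfin. exists (j :: nil). intros x hx. left. symmetry. apply hf2; auto.
  rewrite (hf1 x hx), (hf1 j hj). reflexivity.
Qed.

Definition next (H : K -> Prop) x := epsilon inh (fun y => H y /\ lt x y /\ forall z, H z -> lt x z -> le lt y z).

Lemma next_spec H x : unbounded lt H -> H (next H x) /\ lt x (next H x) /\ forall z, H z -> lt x z -> le lt (next H x) z.
Proof.
  intros HU. unfold next. apply (epsilon_spec inh (fun y => H y /\ lt x y /\ forall z, H z -> lt x z -> le lt y z)).
  destruct (min_exists (fun y => H y /\ lt x y)) as [y [[h1 h2] h3]].
  - apply unb_strict; auto.
  - exists y. refine (conj h1 (conj h2 _)). intros z a b. apply h3. auto.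
Qed.

Lemma L3core (r : K -> K -> Prop) (l : K) (e : K -> K -> K) (H : K -> Prop) :
  (forall a b c, r a b -> r b c -> r a c) -> (forall a, ~ r a a) ->
  unbounded lt H ->
  (forall x y, H x -> H y -> lt x y -> lexr r l (e x) (e y)) ->
  (forall x d, lt d l -> lt (e x d) theta) ->
  exists d, lt d l /\ exists e' : K -> K -> K, (forall x d', lt d' d -> lt (e' x d') theta) /\
     (forall x y, (forall d', lt d' d -> e' x d' = e' y d') -> x = y).
Proof.
  intros rtr rirr HU dir hval.
  set (nx := next H).
  assert (hnx : forall x, H (nx x) /\ lt x (nx x) /\ forall z, H z -> lt x z -> le lt (nx x) z)
    by (intros x; apply next_spec; auto).
  set (P := fun x d => lt d l /\ (forall ee, lt ee d -> e x ee = e (nx x) ee) /\ r (e x d) (e (nx x) d)).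
  set (dl := fun x => epsilon inh (P x)).
  assert (hdl : forall x, H x -> P x (dl x)).
  { intros x hx. apply (epsilon_spec inh (P x)). destruct (hnx x) as [h1 [h2 _]]. apply (dir x (nx x) hx h1 h2). }
  destruct (pigeon_bounded H dl l HU) as [d hd].
  { intros x hx. apply (hdl x hx). }
  destruct (pigeon_bounded _ (fun x => e x (dl x)) theta hd) as [v hv].
  { intros x [hx _]. apply hval. apply (hdl x hx). }
  destruct (hv l) as [x0 [[[hx0 hd0] hv0] _]].
  assert (hdl0 : lt d l) by (rewrite <- hd0; apply (hdl x0 hx0)).
  set (X2 := fun x => (H x /\ dl x = d) /\ e x (dl x) = v).
  assert (claim : forall x x', X2 x -> X2 x' -> lt x x' -> ~ (forall ee, lt ee d -> e x ee = e x' ee)).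
  { intros x x' [[hx hdx] hvx] [[hx' hdx'] hvx'] hxx' agr.
    destruct (hdl x hx) as [_ [agn rn]]. rewrite hdx in agn, rn. rewrite hdx in hvx. rewrite hdx' in hvx'.
    rewrite hvx in rn.
    destruct (hnx x) as [hn1 [hn2 hn3]].
    destruct (hn3 x' hx' hxx') as [hlt|heq].
    - destruct (dir _ _ hn1 hx' hlt) as [d' [_ [agr' rr]]].
      destruct (tri d' d) as [h|[h|h]].
      + rewrite <- (agn d' h), (agr d' h) in rr. exact (rirr _ rr).
      + subst d'. rewrite hvx' in rr. exact (rirr _ (rtr _ _ _ rn rr)).
      + rewrite (agr' d h), hvx' in rn. exact (rirr _ rn).
    - rewrite heq, hvx' in rn. exact (rirr _ rn). }
  exists d. split; auto.
  destruct (unb_card _ hv) as [h [hh1 hh2]].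
  exists (fun z => e (h z)). split.
  - intros x d' hd'. apply hval. eapply trans; eauto.
  - intros z z' agr. apply hh2; try exact I.
    destruct (tri (h z) (h z')) as [q|[q|q]]; auto.
    + exfalso. apply (claim _ _ (hh1 z I) (hh1 z' I) q). auto.
    + exfalso. apply (claim _ _ (hh1 z' I) (hh1 z I) q). intros ee hee. symmetry. auto.
Qed.

Lemma L3 : forall l, ~ exists e : K -> K -> K, (forall x d, lt d l -> lt (e x d) theta) /\
   (forall x y, (forall d, lt d l -> e x d = e y d) -> x = y).
Proof.
  intros l. pattern l. apply (well_founded_ind wf). clear l.
  intros l IH [e [hval hinj]].
  destruct HWC as [_ Hp].
  destruct (Hp (fun x y => bP (lexr lt l (e x) (e y)))) as [H [HH [bcol hom]]].
  assert (HU : unbounded lt H) by (apply card_unb; auto).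
  assert (Hex : exists d, lt d l /\ exists e' : K -> K -> K, (forall x d', lt d' d -> lt (e' x d') theta) /\
     (forall x y, (forall d', lt d' d -> e' x d' = e' y d') -> x = y)).
  { destruct bcol.
    - apply (L3core lt l e H).
      + intros; eapply trans; eauto.
      + apply irr.
      + exact HU.
      + intros x y hx hy hxy. apply bP_true. apply hom; auto.
      + intros x d hd. apply hval. auto.
    - apply (L3core (fun a b => lt b a) l e H).
      + intros a b c h1 h2; eapply trans; eauto.
      + apply irr.
      + exact HU.
      + intros x y hx hy hxy. assert (hn := bP_false _ (hom x y hx hy hxy)).
        destruct (lex_tri l (e x) (e y)) as [q|[d [q1 [q2 q3]]]].
        * apply NNPP. intros N. assert (x = y).
          { apply hinj. intros d hd. apply NNPP. intros N2. apply N. exists d. auto. }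
          subst. exact (irr _ hxy).
        * contradiction.
        * exists d. repeat split; auto. intros ee hee. symmetry. auto.
      + intros x d hd. apply hval. auto. }
  destruct Hex as [d [hd Hd]]. exact (IH d hd Hd).
Qed.

Section Col.
Variable c : K -> K -> K.
Hypothesis Hc1 : coloring_into lt theta c.
Hypothesis Hsub : subadditive lt c.
Hypothesis HUc : witnesses_U lt theta c.

Definition trunc (a : K) (u : K -> K) : K -> K :=
  fun x => if excluded_middle_informative (lt x a) then u x else theta.
Lemma trunc_in a u x : lt x a -> trunc a u x = u x.
Proof. intros h. unfold trunc. destruct (excluded_middle_informative (lt x a)); tauto. Qed.
Lemma trunc_out a u x : ~ lt x a -> trunc a u x = theta.
Proof. intros h. unfold trunc. destruct (excluded_middle_informative (lt x a)); tauto. Qed.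

Lemma part2 : False.
Proof.
  set (t := fun b x => c x b).
  destruct HWC as [_ Hp].
  destruct (Hp (fun x y => bP (lexr lt x (t x) (t y)))) as [H [HH [bcol hom]]].
  assert (HU : unbounded lt H) by (apply card_unb; auto).
  set (big := fun a s => unbounded lt (fun b => (H b /\ lt a b) /\ trunc a (t b) = s)).
  assert (Xa : forall a, unbounded lt (fun b => H b /\ lt a b)).
  { intros a y. destruct (max_exists a y) as [m [m1 [m2 _]]].
    destruct (unb_strict H HU m) as [b [hb hmb]]. exists b. repeat split; auto.
    eapply le_lt_trans; eauto. apply lt_le. eapply le_lt_trans; eauto. }
  assert (bigex : forall a, exists s, big a s).
  { intros a. apply (pigeon_gen (K -> K) _ (fun b => trunc a (t b)) (Xa a)).
    intros e he hinj. apply (L3 a). exists (fun z => trunc a (t (e z))). split.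
    - intros x d hd. rewrite trunc_in; auto. unfold t. apply Hc1. eapply trans; eauto. apply (he x).
    - intros z z' agr. apply hinj. apply functional_extensionality. intros x.
      destruct (classic (lt x a)) as [q|q]; auto. rewrite !trunc_out; auto. }
  assert (bigfun : forall a s, big a s -> forall x, ~ lt x a -> s x = theta).
  { intros a s hs x hx. destruct (hs a) as [b [[_ hb] _]]. rewrite <- hb. apply trunc_out; auto. }
  assert (uniq1 : forall a s1 s2, big a s1 -> big a s2 -> lexr lt a s1 s2 -> False).
  { intros a s1 s2 h1 h2 [d [hda [agr hr]]].
    destruct (unb_strict _ h1 a) as [b1 [[[hb1 hab1] e1] _]].
    destruct (unb_strict _ h2 b1) as [b2 [[[hb2 hab2] e2] h12]].
    destruct (unb_strict _ h1 b2) as [b3 [[[hb3 hab3] e3] h23]].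
    assert (L12 : lexr lt b1 (t b1) (t b2)).
    { exists d. refine (conj (trans _ _ _ hda hab1) (conj _ _)).
      - intros ee hee. assert (hea : lt ee a) by (eapply trans; eauto).
        rewrite <- (trunc_in a (t b1) ee hea), <- (trunc_in a (t b2) ee hea), e1, e2. auto.
      - rewrite <- (trunc_in a (t b1) d hda), <- (trunc_in a (t b2) d hda), e1, e2. auto. }
    assert (L32 : lexr lt b2 (t b3) (t b2)).
    { exists d. refine (conj (trans _ _ _ hda hab2) (conj _ _)).
      - intros ee hee. assert (hea : lt ee a) by (eapply trans; eauto).
        rewrite <- (trunc_in a (t b3) ee hea), <- (trunc_in a (t b2) ee hea), e3, e2. auto.
      - rewrite <- (trunc_in a (t b3) d hda), <- (trunc_in a (t b2) d hda), e3, e2. auto. }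
    assert (c12 := hom b1 b2 hb1 hb2 h12). assert (c23 := hom b2 b3 hb2 hb3 h23).
    destruct bcol.
    + apply bP_true in c23. exact (lex_antisym _ _ _ _ c23 L32).
    + apply bP_false in c12. exact (c12 L12). }
  assert (uniq : forall a s1 s2, big a s1 -> big a s2 -> s1 = s2).
  { intros a s1 s2 h1 h2. apply functional_extensionality. intros x. apply NNPP. intros N.
    destruct (lex_tri a s1 s2) as [q|q].
    - exists x. split; auto. apply NNPP. intros hx. apply N. rewrite (bigfun a s1 h1 x hx), (bigfun a s2 h2 x hx). auto.
    - exact (uniq1 a s1 s2 h1 h2 q).
    - exact (uniq1 a s2 s1 h2 h1 q). }
  set (sa := fun a => epsilon (inhabits (fun _ : K => theta)) (big a)).
  assert (hsa : forall a, big a (sa a)) by (intros a; apply (epsilon_spec (inhabits (fun _ : K => theta)) (big a)), bigex).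
  assert (coh1 : forall a a' x, le lt a a' -> lt x a -> sa a x = sa a' x).
  { intros a a' x haa' hxa.
    assert (hb : big a (trunc a (sa a'))).
    { intros y. destruct (hsa a' y) as [b [[[hb hab] eb] hyb]]. exists b. refine (conj (conj (conj hb _) _) hyb).
      - eapply le_lt_trans; eauto.
      - rewrite <- eb. apply functional_extensionality. intros z.
        destruct (classic (lt z a)) as [q|q].
        + rewrite !trunc_in; auto. eapply lt_le_trans; eauto.
        + rewrite !trunc_out; auto. }
    rewrite (uniq a (sa a) _ (hsa a) hb). apply trunc_in; auto. }
  assert (coh : forall a a' x, lt x a -> lt x a' -> sa a x = sa a' x).
  { intros a a' x h1 h2. destruct (tri a a') as [q|[q|q]].
    - apply coh1; auto. apply lt_le; auto.
    - subst; auto.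
    - symmetry. apply coh1; auto. apply lt_le; auto. }
  assert (saval : forall a x b, lt x a -> H b -> lt a b -> trunc a (t b) = sa a -> c x b = sa a x).
  { intros a x b hx hb hab e. rewrite <- e. rewrite trunc_in; auto. }
  set (ax := fun x => epsilon inh (lt x)).
  assert (hax : forall x, lt x (ax x)) by (intros x; apply (epsilon_spec inh (lt x)), no_max).
  set (F := fun x => sa (ax x) x).
  assert (HFb : forall x, lt (F x) theta).
  { intros x. destruct (hsa (ax x) (ax x)) as [b [[[hb hab] eb] _]].
    unfold F. rewrite <- (saval (ax x) x b (hax x) hb hab eb). apply Hc1. eapply trans; eauto. }
  destruct (pigeon_bounded (fun _ => True) F theta) as [v hv].
  { intros b. exists b. split; auto. apply le_refl. }
  { intros x _. auto. }
  assert (hvt : lt v theta).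
  { destruct (hv v) as [x [[_ hx] _]]. rewrite <- hx. auto. }
  destruct (theta_limit v hvt) as [v' [hvv' hv't]].
  destruct (HUc _ (unb_card _ hv) v' hv't) as [x [x' [[_ hx] [[_ hx'] [hxx' hle]]]]].
  destruct (no_max x') as [a ha].
  destruct (unb_strict _ (hsa a) a) as [b [[[hb hab] eb] _]].
  assert (hxa : lt x a) by (eapply trans; eauto).
  assert (cx : c x b = v).
  { rewrite (saval a x b hxa hb hab eb). rewrite <- hx. unfold F. apply coh; auto. }
  assert (cx' : c x' b = v).
  { rewrite (saval a x' b ha hb hab eb). rewrite <- hx'. unfold F. apply coh; auto. }
  destruct (Hsub x x' b hxx' (trans _ _ _ ha hab)) as [_ [q|q]].
  - rewrite cx in q. apply (le_not_lt _ _ hle). eapply le_lt_trans; eauto.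
  - rewrite cx' in q. apply (le_not_lt _ _ hle). eapply le_lt_trans; eauto.
Qed.

End Col.
End Part2.

End Basics.


Theorem proposition3p8 (K : Type) (lt : K -> K -> Prop)
  (Hwo : strict_well_order lt)
  (Hkappa : kappa_infinite_regular lt)
  (theta : K) (Htheta : infinite_regular lt theta)
  (Hbox : boxminus_minus lt theta) :
  (exists c : K -> K -> K,
     coloring_into lt theta c /\
     sigma_closed lt theta (E_ge lt theta) c /\
     subadditive lt c /\
     witnesses_U lt theta c) /\
  ~ weakly_compact lt.
Proof.
  destruct Hbox as [C [i Hb]].
  assert (H1 := part1_into K lt Hwo Hkappa theta C i Hb).
  assert (H2 := part1_closed K lt Hwo Hkappa theta C i Hb).
  assert (H3 := part1_subadd K lt Hwo Hkappa theta C i Hb).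
  assert (H4 := part1_U K lt Hwo Hkappa theta C i Hb).
  split.
  - exists (cc K lt Hkappa theta C i). auto.
  - intros HWC. exact (part2 K lt Hwo Hkappa theta Htheta HWC _ H1 H3 H4).
Qed.
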